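(* Consider any run of Algorithm 1 (described in the context) under the standing assumption. For every $k\in\mathcal{K}$, if $k\in\mathcal{U}$ then $\delta_k>3(1-\eta)\epsilon_H/L_H$. Consequently, \[ \delta_k\ \ge\ \delta_{\min}:=\min\Big\{\delta_0,\ \tfrac{3\gamma_1(1-\eta)}{L_H}\,\epsilon_H\Big\}\in(0,\infty)\quad\text{for all }k\in\mathcal{K}. \]
   Context: Let $f:\mathbb{R}^n\to\mathbb{R}$ with gradient $g=\nabla f$ and Hessian $H=\nabla^2 f$; $\|\cdot\|$ is the Euclidean norm and $\lambda_{\min}(\cdot)$ the smallest eigenvalue of a symmetric matrix. Write $f_k=f(x_k)$, $g_k=g(x_k)$, $H_k=H(x_k)$ and $m_k(x):=f_k+g_k^T(x-x_k)+\tfrac12(x-x_k)^TH_k(x-x_k)$. Algorithm 1 (exact trust-region Newton method). Inputs: tolerances $\epsilon_g,\epsilon_H>0$; parameters $\gamma_1\in(0,1)$, $\gamma_2\in[1,\infty)$, $\psi\in(1/\gamma_2,1]$; $x_0\in\mathbb{R}^n$; $\delta_0>0$; $\delta_{\max}\ge\delta_0$; $\eta\in(0,1)$. For $k=0,1,2,\dots$: evaluate $g_k,H_k$; if $\|g_k\|\le\epsilon_g$, compute $\lambda_k=\lambda_{\min}(H_k)$ and, if $\lambda_k\ge-\epsilon_H$, return $x_k$ (terminate). Otherwise compute $s_k$ as a global solution of $\min_{s}\ m_k(x_k+s)+\tfrac12\epsilon_H\|s\|^2$ subject to $\|s\|\le\delta_k$. Set $\rho_k=\frac{f_k-f(x_k+s_k)}{m_k(x_k)-m_k(x_k+s_k)}$.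 If $\rho_k\ge\eta$: $x_{k+1}=x_k+s_k$, and $\delta_{k+1}=\min\{\gamma_2\delta_k,\delta_{\max}\}$ if $\|s_k\|\ge\psi\delta_k$, else $\delta_{k+1}=\delta_k$. If $\rho_k<\eta$: $x_{k+1}=x_k$ and $\delta_{k+1}=\gamma_1\|s_k\|$. $\mathcal{K}$ is the set of indices $k$ such that iteration $k$ is completed without termination; $\mathcal{U}=\{k\in\mathcal{K}:\rho_k<\eta\}$. Standing assumption: the sequence $\{f_k\}$ is bounded below by some $f_{\rm low}\in\mathbb{R}$, and all segments $[x_k,x_k+s_k]$ lie in an open set on which $f$ is twice continuously differentiable with gradient Lipschitz continuous with constant $L_g>0$ and Hessian Lipschitz continuous with constant $L_H>0$. *)

(* Defs.v *)
From HB Require Import structures.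
From mathcomp Require Import all_boot all_order all_algebra.
From mathcomp Require Import all_classical all_reals all_analysis.
Set Implicit Arguments. Unset Strict Implicit. Unset Printing Implicit Defensive.
Import Order.TTheory GRing.Theory Num.Theory.
Import numFieldNormedType.Exports.
Local Open Scope classical_set_scope.
Local Open Scope ring_scope.

Section TR.
Variables (R : realType) (n : nat).
Implicit Types (u v s t x y : 'cV[R]_n) (A : 'M[R]_n).

Definition dotv u v : R := \sum_(i < n) u i ord0 * v i ord0.
Definition enorm v : R := Num.sqrt (dotv v v).

Definition lambda_min A : R := inf [set a : R | eigenvalue A a].

Definition tr_model (fk : R) (gk : 'cV[R]_n) (Hk : 'M[R]_n) s : R :=
  fk + dotv gk s + 1/2 * dotv s (Hk *m s).

Definition is_tr_solution fk gk Hk (epsH delta : R) s : Prop :=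
  enorm s <= delta /\
  forall t, enorm t <= delta ->
    tr_model fk gk Hk s + epsH / 2 * enorm s ^+ 2
      <= tr_model fk gk Hk t + epsH / 2 * enorm t ^+ 2.

Definition stop_test (g : 'cV[R]_n -> 'cV[R]_n) (H : 'cV[R]_n -> 'M[R]_n)
  (epsg epsH : R) x : Prop :=
  enorm (g x) <= epsg /\ - epsH <= lambda_min (H x).

Definition inK g H epsg epsH (x : nat -> 'cV[R]_n) (k : nat) : Prop :=
  forall j, (j <= k)%N -> ~ stop_test g H epsg epsH (x j).

Definition rho_k (f : 'cV[R]_n -> R) g H (x s : nat -> 'cV[R]_n) (k : nat) : R :=
  (f (x k) - f (x k + s k)) /
  (f (x k) - tr_model (f (x k)) (g (x k)) (H (x k)) (s k)).

Definition alg1_run (f : 'cV[R]_n -> R) g H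
  (epsg epsH gamma1 gamma2 psi eta delta0 deltamax : R) (x0 : 'cV[R]_n)
  (x s : nat -> 'cV[R]_n) (delta : nat -> R) : Prop :=
  [/\ [/\ 0 < epsg, 0 < epsH, 0 < gamma1 < 1, 1 <= gamma2 & gamma2^-1 < psi <= 1],
   [/\ 0 < delta0, delta0 <= deltamax, 0 < eta < 1, x 0 = x0 & delta 0 = delta0]
   & forall k, inK g H epsg epsH x k ->
      [/\ is_tr_solution (f (x k)) (g (x k)) (H (x k)) epsH (delta k) (s k),
          eta <= rho_k f g H x s k ->
            x k.+1 = x k + s k /\
            delta k.+1 = (if psi * delta k <= enorm (s k)
                          then Num.min (gamma2 * delta k) deltamax
                          else delta k)
        & rho_k f g H x s k < eta ->
            x k.+1 = x k /\ delta k.+1 = gamma1 * enorm (s k)]].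

Definition standing_assumption (f : 'cV[R]_n -> R) g H (epsg epsH : R)
  (x s : nat -> 'cV[R]_n) (Lg LH : R) : Prop :=
  (exists flow : R, forall k, inK g H epsg epsH x k -> flow <= f (x k)) /\
  exists U : set 'cV[R]_n,
  [/\ open U /\
      (forall k, inK g H epsg epsH x k ->
         forall t : R, 0 <= t <= 1 -> U (x k + t *: s k)),
      (forall y, U y -> differentiable f y /\
                        forall v, 'd f y v = dotv (g y) v) /\
      (forall y, U y -> differentiable g y /\
                        forall v, 'd g y v = H y *m v),
      (forall y, U y -> {for y, continuous H}),
      0 < Lg /\ (forall y z, U y -> U z -> enorm (g y - g z) <= Lg * enorm (y - z))
    & 0 < LH /\ (forall y z, U y -> U z -> forall v,
                   enorm ((H y - H z) *m v) <= LH * enorm (y - z) * enorm v)].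

End TR.

(* Main.v *)
Require Import Defs.
From HB Require Import structures.
From mathcomp Require Import all_boot all_order all_algebra.
From mathcomp Require Import all_classical all_reals all_analysis.
From mathcomp Require Import ring lra.
Import Order.TTheory GRing.Theory Num.Theory.
Import numFieldNormedType.Exports.
Local Open Scope classical_set_scope.
Local Open Scope ring_scope.

Section V.
Variables (R : realType) (n : nat).
Implicit Types (u v w : 'cV[R]_n).

Lemma dotvC u v : dotv u v = dotv v u.
Proof. by rewrite /dotv; apply: eq_bigr => i _; rewrite mulrC. Qed.

Lemma dotvDl u v w : dotv (u + v) w = dotv u w + dotv v w.
Proof. by rewrite /dotv -big_split; apply: eq_bigr => i _; rewrite !mxE mulrDl. Qed.

Lemma dotvZl (a : R) u w : dotv (a *: u) w = a * dotv u w.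
Proof. by rewrite /dotv mulr_sumr; apply: eq_bigr => i _; rewrite !mxE mulrA. Qed.

Lemma dotvNl u w : dotv (- u) w = - dotv u w.
Proof. by rewrite -scaleN1r dotvZl mulN1r. Qed.

Lemma dotvBl u v w : dotv (u - v) w = dotv u w - dotv v w.
Proof. by rewrite dotvDl dotvNl. Qed.

Lemma dotvZr (a : R) u w : dotv u (a *: w) = a * dotv u w.
Proof. by rewrite dotvC dotvZl dotvC. Qed.

Lemma dotv0l w : dotv 0 w = 0.
Proof. by rewrite /dotv big1 // => i _; rewrite mxE mul0r. Qed.

Lemma dotv_ge0 u : 0 <= dotv u u.
Proof. by rewrite /dotv sumr_ge0 // => i _; rewrite -expr2 sqr_ge0. Qed.

Lemma dotv_gt0 u : u != 0 -> 0 < dotv u u.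
Proof.
move=> u0.
have [i ui] : exists i, u i ord0 != 0.
  apply/existsP; apply: contraR u0 => /existsPn h; apply/eqP/matrixP => a b.
  by rewrite (ord1 b) mxE; move: (h a); rewrite negbK => /eqP.
rewrite /dotv (bigD1 i) //=; apply: ltr_pwDl.
  by rewrite lt_def mulf_neq0 // -expr2 sqr_ge0.
by apply: sumr_ge0 => j _; rewrite -expr2 sqr_ge0.
Qed.

Lemma enorm_ge0 u : 0 <= enorm u.
Proof. exact: sqrtr_ge0. Qed.

Lemma enorm_sq u : enorm u ^+ 2 = dotv u u.
Proof. by rewrite /enorm sqr_sqrtr // dotv_ge0. Qed.

Lemma enormZ (a : R) u : enorm (a *: u) = `|a| * enorm u.
Proof.
by rewrite /enorm dotvZl dotvZr mulrA -expr2 sqrtrM ?sqr_ge0 // sqrtr_sqr.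
Qed.

Lemma cs_sq u v : dotv u v ^+ 2 <= dotv u u * dotv v v.
Proof.
pose a i := u i ord0; pose b i := v i ord0.
have key : 2 * (dotv u u * dotv v v - dotv u v ^+ 2) =
  \sum_(i < n) \sum_(j < n) (a i * b j - a j * b i) ^+ 2.
  have e1 : \sum_(i < n) \sum_(j < n) (a i * b j - a j * b i) ^+ 2 =
    \sum_(i < n) \sum_(j < n) (a i ^+ 2 * b j ^+ 2)
    + \sum_(i < n) \sum_(j < n) (a j ^+ 2 * b i ^+ 2)
    - 2 * \sum_(i < n) \sum_(j < n) (a i * b i * (a j * b j)).
    rewrite mulr_sumr -sumrN -!big_split /=; apply: eq_bigr => i _.
    rewrite mulr_sumr -sumrN -!big_split /=; apply: eq_bigr => j _.
    by rewrite !expr2; ring.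
  rewrite e1 (exchange_big _ _ _ _ _ (fun i j => a j ^+ 2 * b i ^+ 2)) /=.
  rewrite /dotv expr2.
  have e2 : \sum_(i < n) \sum_(j < n) (a i ^+ 2 * b j ^+ 2) =
     (\sum_(i < n) u i ord0 * u i ord0) * \sum_(i < n) v i ord0 * v i ord0.
    rewrite mulr_suml; apply: eq_bigr => i _; rewrite mulr_sumr; apply: eq_bigr => j _.
    by rewrite /a /b !expr2.
  have e3 : \sum_(i < n) \sum_(j < n) (a i * b i * (a j * b j)) =
     (\sum_(i < n) (u i ord0 * v i ord0)) * \sum_(i < n) u i ord0 * v i ord0.
    rewrite mulr_suml; apply: eq_bigr => i _; rewrite mulr_sumr; apply: eq_bigr => j _ //.
  rewrite e2 e3; ring.
have : 0 <= \sum_(i < n) \sum_(j < n) (a i * b j - a j * b i) ^+ 2.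
  by apply: sumr_ge0 => i _; apply: sumr_ge0 => j _; apply: sqr_ge0.
rewrite -key pmulr_rge0 // subr_ge0 //.
Qed.

Lemma cs u v : dotv u v <= enorm u * enorm v.
Proof.
apply: (le_trans (ler_norm _)).
rewrite /enorm -sqrtrM ?dotv_ge0 // -sqrtr_sqr ler_sqrt ?mulr_ge0 ?dotv_ge0 //.
exact: cs_sq.
Qed.

Lemma cs_abs u v : `|dotv u v| <= enorm u * enorm v.
Proof.
rewrite /enorm -sqrtrM ?dotv_ge0 // -sqrtr_sqr ler_sqrt ?mulr_ge0 ?dotv_ge0 //.
exact: cs_sq.
Qed.

End V.
Arguments dotvC {R n}.
Arguments dotvDl {R n}.
Arguments dotvZl {R n}.
Arguments dotvNl {R n}.
Arguments dotvBl {R n}.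
Arguments dotvZr {R n}.
Arguments dotv0l {R n}.
Arguments dotv_ge0 {R n}.
Arguments dotv_gt0 {R n}.
Arguments enorm_ge0 {R n}.
Arguments enorm_sq {R n}.
Arguments enormZ {R n}.
Arguments cs_sq {R n}.
Arguments cs {R n}.
Arguments cs_abs {R n}.
Lemma comp_deriv (R : realType) (n : nat) (W : normedModType R) (F : 'cV[R]_n -> W) x s t :
  differentiable F (x + t *: s) ->
  is_derive t 1 (fun u : R => F (x + u *: s)) ('d F (x + t *: s) s).
Proof.
move=> dF.
have e : (fun u : R => x + u *: s) = cst x + ( *:%R ^~ s) by apply/funext.
have hg : is_diff t (cst x + ( *:%R ^~ s)) (0 + ( *:%R ^~ s)) by exact: is_diffD.
have dg : differentiable (fun u : R => x + u *: s) t by rewrite e; exact: ex_diff.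
have dh : differentiable (F \o (fun u : R => x + u *: s)) t.
  exact: differentiable_comp.
apply: DeriveDef; first exact: diff_derivable.
rewrite (_ : (fun u : R => F (x + u *: s)) = F \o (fun u : R => x + u *: s)) //.
rewrite deriveE // diff_comp //= e diff_val /= add0r scale1r //.
Qed.

Lemma coord_deriv (R : realType) (n : nat) (G : R -> 'cV[R]_n) (dG : 'cV[R]_n) (t : R) i :
  is_derive t 1 G dG -> is_derive t 1 (fun u => G u i ord0) (dG i ord0).
Proof.
move=> hG.
have dG' : derivable G t 1 by exact: ex_derive.
have := dG'; move/derivable_mxP => /(_ i ord0) di.
apply: DeriveDef => //.
have := derive_mx dG'; rewrite derive_val => ->.
by rewrite mxE.
Qed.

Lemma dotv_deriv (R : realType) (n : nat) (G : R -> 'cV[R]_n) (dG : 'cV[R]_n) (t : R) s :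
  is_derive t 1 G dG -> is_derive t 1 (fun u => dotv (G u) s) (dotv dG s).
Proof.
move=> hG.
have -> : (fun u => dotv (G u) s) = \sum_(i < n) (s i ord0 *: (fun u => G u i ord0)).
  apply/funext => u; rewrite /dotv fct_sumE; apply: eq_bigr => i _.
  by rewrite /= mulrC.
apply: is_derive_eq.
  apply: is_derive_sum => i; apply: is_deriveZ; exact: coord_deriv.
rewrite /dotv; apply: eq_bigr => i _; by rewrite mulrC.
Qed.

Lemma nonincr_ab (R : realType) (F dF : R -> R) (a b : R) : a <= b ->
  (forall t, a <= t <= b -> is_derive t 1 F (dF t)) ->
  (forall t, a <= t <= b -> dF t <= 0) -> F b <= F a.
Proof.
move=> ab hd hn.
have cF : {within `[a, b], continuous F}.
  apply: derivable_within_continuous => t; rewrite in_itv /= => /hd h.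
  exact: ex_derive.
have hd' : forall x, x \in `]a, b[ -> is_derive x 1 F (dF x).
  move=> x; rewrite in_itv /= => /andP[ax xb]; apply: hd.
  by rewrite !ltW.
have [c] := MVT_segment ab hd' cF.
rewrite in_itv /= => cI e.
rewrite -subr_le0 e mulr_le0_ge0 ?subr_ge0 //; exact: hn.
Qed.

Lemma der_pow (R : realType) (t : R) k :
  is_derive t 1 (fun u : R => u ^+ k) (k%:R * t ^+ k.-1).
Proof.
apply: DeriveDef; first exact: exprn_derivable.
rewrite exp_derive; rewrite /GRing.scale /=; by rewrite mulr1.
Qed.

Arguments comp_deriv {R n W F x s t}.
Arguments dotv_deriv {R n G dG t} s.
Arguments coord_deriv {R n G dG t} i.
Arguments nonincr_ab {R} F dF {a b}.
Arguments der_pow {R} t k.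

Section Der.
Variable R : realType.
Implicit Types (F G : R -> R).

Lemma der_B F G dF dG (t : R) : is_derive t 1 F dF -> is_derive t 1 G dG ->
  is_derive t 1 (fun u => F u - G u) (dF - dG).
Proof. move=> h1 h2; exact: is_deriveB. Qed.

Lemma der_M F dF (a t : R) : is_derive t 1 F dF ->
  is_derive t 1 (fun u => a * F u) (a * dF).
Proof. move=> h; exact: is_deriveZ. Qed.

Lemma der_c (k t : R) : is_derive t 1 (fun _ : R => k) 0.
Proof. exact: is_derive_cst. Qed.
End Der.
Arguments der_B {R F G dF dG t}.
Arguments der_M {R F dF} a {t}.
Arguments der_c {R} k t.

Lemma taylor (R : realType) (n : nat) (f : 'cV[R]_n -> R) g H (U : set 'cV[R]_n) LH x s :
 (forall t, 0 <= t <= 1 -> U (x + t *: s)) ->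
 (forall y, U y -> differentiable f y /\ forall v, 'd f y v = dotv (g y) v) ->
 (forall y, U y -> differentiable g y /\ forall v, 'd g y v = H y *m v) ->
 (forall y z, U y -> U z -> forall v,
     enorm ((H y - H z) *m v) <= LH * enorm (y - z) * enorm v) ->
 f (x + s) - tr_model (f x) (g x) (H x) s <= LH / 6 * enorm s ^+ 3.
Proof.
move=> hU hf hg hH.
set c := LH * enorm s ^+ 3.
pose p (u : R) := dotv (g (x + u *: s)) s.
pose q (u : R) := dotv (H (x + u *: s) *m s) s.
have dphi (t : R) : 0 <= t <= 1 -> is_derive t 1 (fun u => f (x + u *: s)) (p t).
  move=> /hU /hf [df e]; have := comp_deriv df; by rewrite e.
have dp (t : R) : 0 <= t <= 1 -> is_derive t 1 p (q t).
  move=> /hU /hg [dg e]; have := comp_deriv dg; rewrite e => h.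
  exact: (dotv_deriv s h).
have hq (t : R) : 0 <= t <= 1 -> q t - q 0 <= c * t.
  move=> /[dup] t01 /andP[t0 t1].
  have U0 : U (x + 0 *: s) by apply: hU; rewrite lexx ler01.
  rewrite /q -dotvBl -mulmxBl.
  apply: (le_trans (cs _ _)).
  apply: (le_trans (ler_wpM2r (enorm_ge0 _) (hH _ _ (hU _ t01) U0 s))).
  rewrite scale0r addr0 addrAC subrr add0r enormZ ger0_norm // /c.

  by rewrite le_eqVlt; apply/orP; left; apply/eqP; rewrite !exprS expr0; ring.
have hchi (t : R) : 0 <= t <= 1 -> p t - p 0 - t * q 0 - c / 2 * t ^+ 2 <= 0.
  move=> /andP[t0 t1].
  have := @nonincr_ab R (fun u => p u - p 0 - u * q 0 - c / 2 * u ^+ 2)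
           (fun u => q u - q 0 - c * u) 0 t t0.
  rewrite /= subrr mul0r sub0r expr0n /= mulr0 subr0 oppr0; apply.
    move=> u /andP[u0 ut].
    have u01 : 0 <= u <= 1 by rewrite u0 /=; exact: le_trans ut t1.
    have hl : is_derive u 1 (fun v : R => v * q 0) (q 0).
      have := der_M (q 0) (der_pow u 1).
      rewrite (_ : (fun v : R => q 0 * v ^+ 1) = (fun v => v * q 0)).
        by rewrite mul1r expr0 mulr1.
      by apply/funext => v; rewrite expr1 mulrC.
    have h1 := der_B (der_B (der_B (dp u u01) (der_c (p 0) u)) hl) (der_M (c / 2) (der_pow u 2)).
    apply: is_derive_eq h1 _.
    by rewrite /= expr1; field.
  move=> u /andP[u0 ut].
  have u01 : 0 <= u <= 1 by rewrite u0 /=; exact: le_trans ut t1.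
  have := hq u u01; lra.
pose F u := f (x + u *: s) - f (x + 0 *: s) - u * p 0 - q 0 / 2 * u ^+ 2 - c / 6 * u ^+ 3.
have hd1 (u : R) : 0 <= u <= 1 -> is_derive u 1 F (p u - p 0 - u * q 0 - c / 2 * u ^+ 2).
  move=> u01.
  have hl : is_derive u 1 (fun v : R => v * p 0) (p 0).
    have := der_M (p 0) (der_pow u 1).
    rewrite (_ : (fun v : R => p 0 * v ^+ 1) = (fun v => v * p 0)).
      by rewrite mul1r expr0 mulr1.
    by apply/funext => v; rewrite expr1 mulrC.
  have h1 := der_B (der_B (der_B (der_B (dphi u u01) (der_c (f (x + 0 *: s)) u)) hl)
     (der_M (q 0 / 2) (der_pow u 2))) (der_M (c / 6) (der_pow u 3)).
  apply: is_derive_eq h1 _.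
  by rewrite /= expr1; field.
have := @nonincr_ab R F (fun u => p u - p 0 - u * q 0 - c / 2 * u ^+ 2) 0 1 ler01 hd1 hchi.
rewrite /F /= subrr mul0r sub0r !expr0n /= !mulr0 !subr0 oppr0 scale1r scale0r addr0.
rewrite /p /q /tr_model /c scale0r addr0 expr1n !mul1r (dotvC s).
lra.
Qed.

Lemma tr_model0 (R : realType) (n : nat) (fk : R) gk (Hk : 'M[R]_n) :
  tr_model fk gk Hk 0 = fk.
Proof.
by rewrite /tr_model mulmx0 (dotvC gk) !dotv0l mulr0 !addr0.
Qed.

Lemma enorm0 (R : realType) (n : nat) : enorm (0 : 'cV[R]_n) = 0.
Proof. by rewrite /enorm dotv0l sqrtr0. Qed.

Lemma Phi_scale (R : realType) (n : nat) (fk b eps : R) gk (Hk : 'M[R]_n) w :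
  tr_model fk gk Hk (b *: w) + eps / 2 * enorm (b *: w) ^+ 2 - fk =
  b * dotv gk w + b ^+ 2 / 2 * (dotv w (Hk *m w) + eps * dotv w w).
Proof.
rewrite /tr_model enorm_sq -scalemxAr !dotvZl !dotvZr.
by rewrite expr2; field.
Qed.

Arguments Phi_scale {R n}.
Arguments tr_model0 {R n}.
Arguments enorm0 {R n}.

Lemma dotv_mx (R : realType) (n : nat) (u v : 'cV[R]_n) : dotv u v = (u^T *m v) ord0 ord0.
Proof. by rewrite /dotv mxE; apply: eq_bigr => i _; rewrite mxE. Qed.

Lemma s_pos (R : realType) (n : nat) (fk : R) gk (Hk : 'M[R]_n) epsg eps delta s :
  0 < eps -> 0 < epsg -> 0 < delta -> is_tr_solution fk gk Hk eps delta s ->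
  ~ (enorm gk <= epsg /\ - eps <= lambda_min Hk) -> 0 < enorm s.
Proof.
move=> e0 eg0 d0 [sd sopt] nst.
rewrite lt_def enorm_ge0 andbT; apply/negP => /eqP s0.
have ms : tr_model fk gk Hk s = fk.
  have h1 := cs_abs gk s; have h2 := cs_abs s (Hk *m s).
  rewrite s0 mulr0 normr_le0 in h1; rewrite s0 mul0r normr_le0 in h2.
  by rewrite /tr_model (eqP h1) (eqP h2) mulr0 !addr0.
have Phi_ge0 b w : enorm (b *: w) <= delta ->
    0 <= b * dotv gk w + b ^+ 2 / 2 * (dotv w (Hk *m w) + eps * dotv w w).
  move=> /sopt; rewrite ms s0 expr0n /= mulr0 addr0 -(Phi_scale fk b eps) => h.
  by rewrite subr_ge0.
have [gbig|gsmall] := ltP epsg (enorm gk).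
  set G := enorm gk.
  have G0 : 0 < G by exact: lt_trans gbig.
  set K := `|dotv gk (Hk *m gk)| + eps * G ^+ 2.
  have K0 : 0 <= K by apply: addr_ge0 => //; apply: mulr_ge0; [exact: ltW|exact: sqr_ge0].
  set tau := Num.min (delta / G) (G ^+ 2 / (K + 1)).
  have tau0 : 0 < tau.
    rewrite lt_min; apply/andP; split; apply: divr_gt0 => //; [exact: exprn_gt0|exact: ltr_wpDl].
  have := Phi_ge0 (- tau) gk.
  rewrite enormZ normrN gtr0_norm // -ler_pdivlMr // ge_min lexx /= => /(_ isT).
  rewrite -enorm_sq -/G sqrrN mulNr.
  have hK : dotv gk (Hk *m gk) + eps * G ^+ 2 <= K by rewrite lerD2r ler_norm.
  have hT : tau * K <= G ^+ 2.
    have : tau <= G ^+ 2 / (K + 1) by rewrite ge_min lexx orbT.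
    rewrite ler_pdivlMr ?ltr_wpDl // => h.
    apply: le_trans h; rewrite ler_pM2l // lerDl //.
  have hG2 : 0 < G ^+ 2 by rewrite exprn_gt0.
  move=> h.
  have : tau ^+ 2 / 2 * (dotv gk (Hk *m gk) + eps * G ^+ 2) <= tau ^+ 2 / 2 * K.
    by rewrite ler_pM2l ?divr_gt0 ?exprn_gt0.
  have : tau * (tau * K) <= tau * G ^+ 2 by rewrite ler_pM2l.
  have : 0 < tau * G ^+ 2 by rewrite mulr_gt0.
  rewrite !expr2 in h *; nra.
have lm : lambda_min Hk < - eps.
  by rewrite ltNge; apply/negP => h; apply: nst.
have [S0|S0] := eqVneq [set a : R | eigenvalue Hk a] set0.
  move: lm; rewrite /lambda_min S0 inf0. lra.
have [a Sa alt] := @inf_lt R [set a : R | eigenvalue Hk a] (- eps) ((set0P _).1 S0) lm.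
move: Sa => /= /eigenvalueP [v va v0].
set w := v^T.
have w0 : w != 0 by rewrite trmx_eq0.
have dw : 0 < dotv w w by exact: dotv_gt0.
have hw : dotv w (Hk *m w) = a * dotv w w.
  rewrite !dotv_mx /w trmxK mulmxA va -scalemxAl mxE //.
set W := enorm w.
have W0 : 0 < W by rewrite /W /enorm sqrtr_gt0.
set b := if dotv gk w <= 0 then delta / W else - (delta / W).
have bn : enorm (b *: w) = delta.
  rewrite enormZ /b; case: ifP => _; rewrite ?normrN gtr0_norm ?divr_gt0 // divfK //; exact: lt0r_neq0.
have dW : 0 < delta / W by rewrite divr_gt0.
have hb : b * dotv gk w <= 0.
  rewrite /b; case: ifP => h; [|move/negbT: h; rewrite -ltNge => h]; nra.
have b0 : b != 0 by rewrite /b; case: ifP => _; rewrite ?oppr_eq0 mulf_neq0 ?invr_eq0 ?lt0r_neq0.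
have b2 : 0 < b ^+ 2 by rewrite exprn_even_gt0.
have := Phi_ge0 b w; rewrite bn lexx => /(_ isT).
rewrite hw.
have : (a * dotv w w + eps * dotv w w) < 0.
  rewrite -mulrDl pmulr_llt0 //; lra.
move=> h1 h2.
have : b ^+ 2 / 2 * (a * dotv w w + eps * dotv w w) < 0.
  by rewrite pmulr_rlt0 // divr_gt0.
lra.
Qed.

Lemma key_iter (R : realType) (n : nat) (fk fx1 : R) gk (Hk : 'M[R]_n) eps delta s eta LH :
  0 < eps -> 0 < LH -> eta < 1 -> 0 <= delta -> is_tr_solution fk gk Hk eps delta s ->
  0 < enorm s ->
  fx1 - tr_model fk gk Hk s <= LH / 6 * enorm s ^+ 3 ->
  (fk - fx1) / (fk - tr_model fk gk Hk s) < eta -> 3 * (1 - eta) * eps / LH < enorm s.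
Proof.
move=> e0 L0 eta1 d0 [sd sopt] sp hT hr.
have dec : tr_model fk gk Hk s + eps / 2 * enorm s ^+ 2 <= fk.
  have := sopt 0; rewrite enorm0 d0 tr_model0 expr0n /= mulr0 addr0; exact.
move: (tr_model fk gk Hk s) hT dec hr => m hT dec hr.
move: (enorm s) sp hT dec => S sp hT dec.
have S2 : 0 < S ^+ 2 by rewrite exprn_gt0.
have q0 : 0 < eps / 2 * S ^+ 2 by rewrite mulr_gt0 // divr_gt0.
have D0 : 0 < fk - m by lra.
move: hr; rewrite ltr_pdivrMr // => hr.
have h1 : (1 - eta) * (eps / 2 * S ^+ 2) <= (1 - eta) * (fk - m).
  by rewrite ler_pM2l ?subr_gt0 //; lra.
have h2 : (1 - eta) * (eps / 2 * S ^+ 2) < LH / 6 * S ^+ 3 by lra.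
have h3 : 3 * (1 - eta) * eps < LH * S.
  rewrite -(@ltr_pM2r _ (S ^+ 2 / 6)) ?divr_gt0 //.
  move: h2; rewrite exprS; set T := S ^+ 2; move=> h2.
  have -> : 3 * (1 - eta) * eps * (T / 6) = (1 - eta) * (eps / 2 * T) by field.
  have -> : LH * S * (T / 6) = LH / 6 * (S * T) by field.
  exact: h2.
by rewrite ltr_pdivrMr // (mulrC S).
Qed.

Theorem lemma2p2 (R : realType) (n : nat) (f : 'cV[R]_n -> R)
  (g : 'cV[R]_n -> 'cV[R]_n) (H : 'cV[R]_n -> 'M[R]_n)
  (epsg epsH gamma1 gamma2 psi eta delta0 deltamax Lg LH : R)
  (x0 : 'cV[R]_n) (x s : nat -> 'cV[R]_n) (delta : nat -> R) :
  alg1_run f g H epsg epsH gamma1 gamma2 psi eta delta0 deltamax x0 x s delta ->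
  standing_assumption f g H epsg epsH x s Lg LH ->
  let delta_min := Num.min delta0 (3 * gamma1 * (1 - eta) / LH * epsH) in
  0 < delta_min /\
  forall k, inK g H epsg epsH x k ->
    (rho_k f g H x s k < eta -> 3 * (1 - eta) * epsH / LH < delta k) /\
    delta_min <= delta k.
Proof.
move=> [[eg0 eH0 /andP[g10 g11] g2 /andP[psi1 psi2]] [d00 d0m /andP[eta0 eta1] x00 dl0] hrun].
move=> [_ [U [[oU hU] [hf hg] _ [Lg0 _] [LH0 hLH]]]].
move=> dmin.
have inKS k : inK g H epsg epsH x k.+1 -> inK g H epsg epsH x k.
  by move=> h j jk; apply: h; exact: leqW.
have key k : inK g H epsg epsH x k -> 0 < delta k -> rho_k f g H x s k < eta ->
    3 * (1 - eta) * epsH / LH < enorm (s k).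
  move=> hk dk hr; have [sol _ _] := hrun k hk.
  have sp : 0 < enorm (s k).
    exact: (@s_pos _ _ _ _ _ _ _ _ _ eH0 eg0 dk sol (hk k (leqnn k))).
  apply: (@key_iter _ _ _ _ _ _ _ _ _ _ _ eH0 LH0 eta1 (ltW dk) sol sp _ hr).
  exact: (@taylor _ _ f g H U LH (x k) (s k) (hU k hk) hf hg hLH).
have dpos : 0 < dmin.
  rewrite /dmin lt_min d00 /=.
  by apply: mulr_gt0 => //; apply: divr_gt0 => //; apply: mulr_gt0; [lra|lra].
have ind k : inK g H epsg epsH x k -> dmin <= delta k.
  elim: k => [_|k IH hk1]; first by rewrite dl0 /dmin ge_min lexx.
  have hk := inKS k hk1; have dk := IH hk.
  have dkp : 0 < delta k := lt_le_trans dpos dk.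
  have [_ hacc hrej] := hrun k hk.
  case: (leP eta (rho_k f g H x s k)) => hr.
    have [_ ->] := hacc hr; case: ifP => _ //.
    rewrite le_min; apply/andP; split.
      apply: (le_trans dk); rewrite -[X in X <= _]mul1r ler_pM2r //.
    apply: le_trans d0m; rewrite /dmin ge_min lexx //.
  have [_ ->] := hrej hr.
  have := key k hk dkp hr => hs.
  apply: (le_trans (y := 3 * gamma1 * (1 - eta) / LH * epsH)).
    by rewrite /dmin ge_min lexx orbT.
  have -> : 3 * gamma1 * (1 - eta) / LH * epsH = gamma1 * (3 * (1 - eta) * epsH / LH).
    by field; exact: lt0r_neq0.
  by rewrite ler_pM2l // ltW.
split => // k hk; split; last exact: ind.
move=> hr.
have dkp : 0 < delta k := lt_le_trans dpos (ind k hk).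
have [[sd _] _ _] := hrun k hk.
exact: lt_le_trans (key k hk dkp hr) sd.
Qed.
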